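(* Let $G\cong\mathbb Z/2\mathbb Z\times\mathbb Z/2\mathbb Z$ with generators $\sigma_1,\sigma_2$, and let $M$ be a $\mathbb Z[G]$-module, written multiplicatively, such that $(M,\sigma_1,\sigma_2)$ satisfies QH90. Then \[\ker(1-\sigma_1)(1-\sigma_2)=\ker(1-\sigma_1)\cdot\ker(1-\sigma_2)\] if and only if the following holds: for all $m_1,m_2\in M$ satisfying (1) $(1+\sigma_1)\cdot m_1=1=(1+\sigma_2)\cdot m_2$ and (2) $m_1\,\sigma_1(m_2)=m_2\,\sigma_2(m_1)$, there exists $n\in M$ with $m_i=(1-\sigma_i)\cdot n$ for $i=1,2$.
   Context: The module action is written multiplicatively: for $c_g\in\mathbb Z$, $(\sum_g c_g g)\cdot m=\prod_g g(m)^{c_g}$; e.g. $(1+\sigma_i)\cdot m=m\,\sigma_i(m)$ and $(1-\sigma_i)\cdot m=m/\sigma_i(m)$, where $1$ denotes the identity of $G$ (as an element of $\mathbb Z[G]$), and the identity of $M$ is also written $1$. For $x\in\mathbb Z[G]$, $\ker x=\{m\in M: x\cdot m=1\}$. For subsets $A,B\subseteq M$, $A\cdot B=\{ab:a\in A,b\in B\}$. $(M,\sigma_1,\sigma_2)$ satisfies QH90 means: for each $i\in\{1,2\}$ and $m\in M$, if $(1+\sigma_i)\cdot m=1$ then there exists $n\in M$ with $m=(1-\sigma_i)\cdot n$. *)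

(* Defs.v *)
From HB Require Import structures.
From mathcomp Require Import all_boot all_algebra.
Set Implicit Arguments. Unset Strict Implicit. Unset Printing Implicit Defensive.
Import GRing.Theory.
Local Open Scope ring_scope.

(* The Z[G]-module M (written multiplicatively in the paper) is modelled as an
   additive abelian group V : zmodType; the paper's product m*n is m + n,
   the identity 1 of M is 0, and m/n is m - n. *)

Definition Z2xZ2_action (V : zmodType) (s1 s2 : {additive V -> V}) : Prop :=
  [/\ forall m, s1 (s1 m) = m, forall m, s2 (s2 m) = m
    & forall m, s1 (s2 m) = s2 (s1 m)].

Definition one_minus (V : zmodType) (s : V -> V) (m : V) : V := m - s m.
Definition one_plus (V : zmodType) (s : V -> V) (m : V) : V := m + s m.

Definition kerZG (V : zmodType) (x : V -> V) : V -> Prop := fun m => x m = 0.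

Definition setmul (V : zmodType) (A B : V -> Prop) : V -> Prop :=
  fun m => exists a b, A a /\ B b /\ m = a + b.

Definition set_eq (V : Type) (A B : V -> Prop) : Prop := forall m, A m <-> B m.

Definition QH90 (V : zmodType) (s1 s2 : V -> V) : Prop :=
  forall s, (s = s1 \/ s = s2) ->
    forall m, one_plus s m = 0 -> exists n, m = one_minus s n.

(* Main.v *)
Require Import Defs.
From HB Require Import structures.
From mathcomp Require Import all_boot all_algebra.
Import GRing.Theory.
Local Open Scope ring_scope.

Ltac canc t := rewrite ?(addrAC _ t) ?(addrAC _ (-t)) ?addrK ?subrK.
Ltac flat := rewrite ?opprB ?opprD ?opprK -[LHS]add0r !addrA.

Theorem theorem3 (V : zmodType) (s1 s2 : {additive V -> V}) :
  Z2xZ2_action s1 s2 ->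
  QH90 s1 s2 ->
  (set_eq (kerZG (fun m => one_minus s1 (one_minus s2 m)))
          (setmul (kerZG (one_minus s1)) (kerZG (one_minus s2)))
   <->
   (forall m1 m2 : V,
      one_plus s1 m1 = 0 -> one_plus s2 m2 = 0 ->
      m1 + s1 m2 = m2 + s2 m1 ->
      exists n : V, m1 = one_minus s1 n /\ m2 = one_minus s2 n)).
Proof.
move=> [h1 h2 h12] qh; rewrite /set_eq /kerZG /setmul /one_minus /one_plus.
split.
- move=> H m1 m2 e1 e2 e3.
  have [x ex] := qh s1 (or_introl erefl) m1 e1.
  rewrite /one_minus in ex; subst m1.
  pose y := m2 - (x - s2 x).
  have ya : y - s1 y = 0.
    have e : s1 m2 = m2 + (s2 x - s2 (s1 x)) - (x - s1 x).
      by rewrite -(raddfB s2) -e3 addrC addKr.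
    rewrite /y !(raddfB s1) e h12.
    flat. canc m2. canc (s2 x). canc x. canc (s1 x). canc (s2 (s1 x)). done.
  have yb : y + s2 y = 0.
    rewrite /y !(raddfB s2) h2.
    move: e2; rewrite -[LHS]add0r addrA => e2.
    flat. canc m2. canc (s2 m2). rewrite ?e2. canc x. canc (s2 x). exact e2.
  have [z ez] := qh s2 (or_intror erefl) y yb.
  rewrite /one_minus in ez.
  have [u [v [hu [hv ezuv]]]] : exists a b, a - s1 a = 0 /\ b - s2 b = 0 /\ z = a + b.
    apply/H. by rewrite -ez.
  exists (x + u); split.
    by rewrite raddfD opprD addrACA hu addr0.
  have hy : y = u - s2 u by rewrite ez ezuv raddfD opprD addrACA hv addr0.
  have -> : m2 = y + (x - s2 x) by rewrite /y subrK.
  by rewrite hy (raddfD s2) opprD [RHS]addrACA [LHS]addrC.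
- move=> C m; split.
  + move=> hm.
    have [n [hn1 hn2]] : exists n, 0 = n - s1 n /\ m - s2 m = n - s2 n.
      apply: C.
    * by rewrite (raddf0 s1) addr0.
    * by rewrite (raddfB s2) h2 addrC subrKA subrr.
    * by rewrite add0r (raddf0 s2) addr0; apply/esym/subr0_eq.
    exists n, (m - n); split; first by rewrite hn1.
    split; last by rewrite addrC subrK.
    have hm2 : m = n - s2 n + s2 m by rewrite -hn2 subrK.
    rewrite {1}hm2 (raddfB s2); flat; canc n; canc (s2 n); canc (s2 m); done.
  + move=> [a [b [ha [hb ->]]]].
    have ha' : s1 a = a by apply/esym/subr0_eq.
    have hb' : s2 b = b by apply/esym/subr0_eq.
    rewrite (raddfD s2) hb' (raddfB s1) !(raddfD s1) ha' h12 ha'.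
    flat; canc a; canc b; canc (s2 a); canc (s1 b); done.
Qed.
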